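(* Let $W\in\mathbb{D}_n$ with $\mathcal{E}=\{1,\dots,m\}$ and $|\mathcal{I}|=k\ge1$, $m+k=n$, satisfying the Ground Assumption. Let $W'\in\mathbb{D}_{m+1}$ be a Dale matrix with excitatory set $\{1,\dots,m\}$ and inhibitory set $\{m+1\}$, such that $W'_{ij}=W_{ij}$ for $i,j\in\mathcal{E}$; for all $i\in\mathcal{E}$, $W'_{i(m+1)}<0$ if and only if the $i$-th row of the submatrix $W_{\mathcal{E}\mathcal{I}}$ (rows $\mathcal{E}$, columns $\mathcal{I}$) is nonzero; and the $(m+1)$-st row of $W'$ is zero. Assume $W'$ satisfies the Ground Assumption. Then $\mathcal{C}(W)=\mathcal{C}(W')$.
   Context: Threshold-linear network: $\dot x_i=-x_i+[\sum_j W_{ij}x_j+b_i]_+$ with $[y]_+=\max(0,y)$; a fixed point is $x^*$ with $x^*=[Wx^*+b]_+$. A Dale matrix $W\in\mathbb{D}_n$ is an $n\times n$ real matrix with a partition $[n]=\mathcal{E}\sqcup\mathcal{I}$ such that $W_{ii}=0$, columns indexed by $\mathcal{E}$ are nonnegative and columns indexed by $\mathcal{I}$ are nonpositive. Ground Assumption: $(I-W)_\sigma$ is nonsingular for every nonempty $\sigma\subset[n]$. Excitatory support: $\mathrm{supp}_+x=\{i\in\mathcal{E}:x_i>0\}$. Combinatorial code: $\mathcal{C}(W)=\{\mathrm{supp}_+x^*: b\in\mathbb{R}^n_{\ge0},\ x^*\in\mathbb{R}^n_{\ge0}\text{ a fixed point of }(W,b)\}$. *)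

(* Defs.v *)
From HB Require Import structures.
From mathcomp Require Import all_boot all_order all_algebra.
From mathcomp Require Import reals.
Set Implicit Arguments. Unset Strict Implicit. Unset Printing Implicit Defensive.
Import Order.TTheory GRing.Theory Num.Theory.
Local Open Scope ring_scope.

Section TLN.
Variable R : realType.

Definition is_dale (n : nat) (W : 'M[R]_n) (E : {set 'I_n}) : Prop :=
  [/\ forall i, W i i = 0,
      forall i j, j \in E -> 0 <= W i j
    & forall i j, j \notin E -> W i j <= 0].

Definition principal_submx (n : nat) (A : 'M[R]_n) (s : {set 'I_n})
  : 'M[R]_#|s| := \matrix_(i, j) A (enum_val i) (enum_val j).

Definition ground_assumption (n : nat) (W : 'M[R]_n) : Prop :=
  forall s : {set 'I_n}, s != set0 ->
    \det (principal_submx (1%:M - W) s) != 0.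

Definition is_fixed_point (n : nat) (W : 'M[R]_n) (b x : 'cV[R]_n) : Prop :=
  forall i, x i 0 = Num.max 0 (\sum_j W i j * x j 0 + b i 0).

Definition nonneg_vec (n : nat) (v : 'cV[R]_n) : Prop := forall i, 0 <= v i 0.

(* excitatory indices are the first m indices of 'I_(m+k) *)
Definition exc_set (m k : nat) : {set 'I_(m + k)} := [set lshift k i | i : 'I_m].

Definition supp_plus (m k : nat) (x : 'cV[R]_(m + k)) : {set 'I_m} :=
  [set i : 'I_m | 0 < x (lshift k i) 0].

Definition in_code (m k : nat) (W : 'M[R]_(m + k)) (S : {set 'I_m}) : Prop :=
  exists (b x : 'cV[R]_(m + k)),
    [/\ nonneg_vec b, nonneg_vec x, is_fixed_point W b x & S = supp_plus x].

End TLN.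

(* Main.v *)
Require Import Defs.
From HB Require Import structures.
From mathcomp Require Import all_boot all_order all_algebra.
From mathcomp Require Import reals.
From mathcomp Require Import ring lra.
Import Order.TTheory GRing.Theory Num.Theory.
Local Open Scope ring_scope.

Set Implicit Arguments.
Section H.
Variable R : realType.

Lemma fp_build n (W : 'M[R]_n) (x : 'cV[R]_n) :
  nonneg_vec x -> (forall v, \sum_j W v j * x j 0 <= x v 0) ->
  exists b, nonneg_vec b /\ is_fixed_point W b x.
Proof.
move=> hx hs; exists (\col_v (x v 0 - \sum_j W v j * x j 0)); split.
  by move=> v; rewrite mxE subr_ge0.
move=> v; rewrite mxE addrC subrK; apply/esym/max_idPr; exact: hx.
Qed.

Lemma fp_le n (W : 'M[R]_n) (b x : 'cV[R]_n) :
  nonneg_vec b -> is_fixed_point W b x -> forall v, \sum_j W v j * x j 0 <= x v 0.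
Proof.
move=> hb hf v; rewrite hf le_max; apply/orP; right; rewrite lerDl; exact: hb.
Qed.

Lemma le_sum_abs n (F : 'I_n -> R) i : F i <= \sum_j `|F j|.
Proof.
rewrite (bigD1 i) //=; apply: le_trans (ler_norm _) _; rewrite lerDl.
by apply: sumr_ge0 => j _.
Qed.

Lemma lsh_in m k (i : 'I_m) : lshift k i \in exc_set m k.
Proof. by apply/imsetP; exists i. Qed.

Lemma rsh_notin m k (i : 'I_k) : rshift m i \notin exc_set m k.
Proof.
apply/imsetP => -[j _ /(congr1 val)] /= e.
by have := ltn_ord j; rewrite -e ltnNge leq_addr.
Qed.

Lemma supp_col m k k' (x : 'cV[R]_(m + k)) (y : 'cV[R]_(m + k')) :
  (forall i, x (lshift k i) 0 = y (lshift k' i) 0) -> supp_plus x = supp_plus y.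
Proof. by move=> h; apply/setP => i; rewrite !inE h. Qed.

Lemma bound_neg (A c xi M : R) : c < 0 -> (xi - A) / c <= M -> A + c * M <= xi.
Proof.
move=> hc hM.
have e : c * ((xi - A) / c) = xi - A by rewrite mulrC divfK // lt_eqF.
have : c * M <= c * ((xi - A) / c) by apply: ler_wnM2l => //; exact: ltW.
rewrite e; lra.
Qed.

Lemma sum_col m k (Wr : 'I_(m+k) -> R) (xE : 'cV[R]_m) (M : R) :
  \sum_j Wr j * (col_mx xE (const_mx M) : 'cV[R]_(m+k)) j 0 =
  \sum_(j<m) Wr (lshift k j) * xE j 0 + (\sum_(l<k) Wr (rshift m l)) * M.
Proof.
rewrite big_split_ord mulr_suml; congr (_ + _); apply: eq_bigr => j _.
  by rewrite col_mxEu.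
by rewrite col_mxEd mxE.
Qed.

Lemma col_nonneg m k (xE : 'cV[R]_m) (M : R) :
  nonneg_vec xE -> 0 <= M -> nonneg_vec (col_mx xE (const_mx M) : 'cV[R]_(m+k)).
Proof.
move=> hx hM v; rewrite -(splitK v); case: (split v) => a /=.
  by rewrite col_mxEu.
by rewrite col_mxEd mxE.
Qed.

End H.
Unset Implicit Arguments.

Theorem mainTheorem3 (R : realType) (m k : nat) (W : 'M[R]_(m + k))
  (W' : 'M[R]_(m + 1)) :
  (0 < k)%N ->
  is_dale W (exc_set m k) ->
  ground_assumption W ->
  is_dale W' (exc_set m 1) ->
  (forall i j : 'I_m, W' (lshift 1 i) (lshift 1 j) = W (lshift k i) (lshift k j)) ->
  (forall i : 'I_m, W' (lshift 1 i) (rshift m (ord0 : 'I_1)) < 0 <->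
                    exists j : 'I_k, W (lshift k i) (rshift m j) != 0) ->
  (forall j : 'I_(m + 1), W' (rshift m (ord0 : 'I_1)) j = 0) ->
  ground_assumption W' ->
  forall S : {set 'I_m}, in_code W S <-> in_code W' S.
Proof.
move=> _ [_ dWp dWn] _ [_ dW'p dW'n] hEE hiff hrow _ S.
have Wneg : forall i l, W (lshift k i) (rshift m l) <= 0.
  by move=> i l; apply: dWn; exact: rsh_notin.
have W'neg : forall i, W' (lshift 1 i) (rshift m ord0) <= 0.
  by move=> i; apply: dW'n; exact: rsh_notin.
have rowz : forall i, \sum_(l < k) W (lshift k i) (rshift m l) = 0 ->
    (forall l, W (lshift k i) (rshift m l) = 0) /\ W' (lshift 1 i) (rshift m ord0) = 0.
  move=> i ceq.
  have h0 : forall l, W (lshift k i) (rshift m l) = 0.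
    move=> l; apply/eqP; rewrite -oppr_eq0; apply/eqP.
    apply: (psumr_eq0P (P := xpredT) (F := fun l => - W (lshift k i) (rshift m l))) => //.
      by move=> l' _; rewrite oppr_ge0.
    by rewrite sumrN ceq oppr0.
  split=> //; apply: le_anti; rewrite W'neg /= leNgt; apply/negP => /hiff [j].
  by rewrite h0 eqxx.
have csum_le : forall i, \sum_(l < k) W (lshift k i) (rshift m l) <= 0.
  by move=> i; apply: sumr_le0 => l _.
split.
- move=> [b [x [hb hx hf ->]]].
  pose xE : 'cV[R]_m := \col_i x (lshift k i) 0.
  pose A := fun i : 'I_m => \sum_j W' (lshift 1 i) (lshift 1 j) * xE j 0.
  pose c := fun i : 'I_m => W' (lshift 1 i) (rshift m ord0).
  pose f := fun i => (xE i 0 - A i) / c i.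
  pose M := \sum_i `|f i|.
  have M0 : 0 <= M by apply: sumr_ge0.
  pose x' : 'cV[R]_(m+1) := col_mx xE (const_mx M).
  have [b' [hb' hf']] : exists b', nonneg_vec b' /\ is_fixed_point W' b' x'.
    apply: fp_build.
      by apply: col_nonneg => // i; rewrite mxE.
    move=> v; rewrite -(splitK v); case: (split v) => a /=.
      rewrite sum_col big_ord1 col_mxEu -/(A a) -/(c a).
      have [hlt|hge] := ltP (c a) 0.
        apply: bound_neg => //; move: (@le_sum_abs _ _ f a); rewrite -/M; done.
      have ceq : c a = 0 by apply: le_anti; rewrite hge W'neg.
      rewrite ceq mul0r addr0.
      have hz : forall l, W (lshift k a) (rshift m l) = 0.
        move=> l; apply/eqP; apply/negPn/negP => hne.
        have hex : exists j : 'I_k, W (lshift k a) (rshift m j) != 0 by exists l.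
        by move/hiff: hex; rewrite -/(c a) ceq ltxx.
      have := fp_le hb hf (lshift k a); rewrite big_split_ord /=.
      have -> : \sum_(l < k) W (lshift k a) (rshift m l) * x (rshift m l) 0 = 0.
        by apply: big1 => l _; rewrite hz mul0r.
      rewrite addr0.
      rewrite mxE /A; congr (_ <= _); apply: eq_bigr => j _.
      by rewrite hEE mxE.
    rewrite (ord1 a) sum_col big1; last by move=> j _; rewrite hrow mul0r.
    by rewrite big1 ?mul0r ?addr0 ?col_mxEd ?mxE // => l _; rewrite hrow.
  exists b', x'; split=> //.
    by apply: col_nonneg => // i; rewrite mxE.
  by apply: supp_col => i; rewrite col_mxEu mxE.
- move=> [b [x [hb hx hf ->]]].
  pose xE : 'cV[R]_m := \col_i x (lshift 1 i) 0.
  pose A := fun i : 'I_m => \sum_j W (lshift k i) (lshift k j) * xE j 0.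
  pose c := fun i : 'I_m => \sum_(l < k) W (lshift k i) (rshift m l).
  pose B := fun l : 'I_k => \sum_(j < m) W (rshift m l) (lshift k j) * xE j 0.
  pose f := fun i => (xE i 0 - A i) / c i.
  pose M := \sum_i `|f i| + \sum_l `|B l|.
  have M1 : 0 <= \sum_i `|f i| by apply: sumr_ge0.
  have M2 : 0 <= \sum_l `|B l| by apply: sumr_ge0.
  have M0 : 0 <= M by rewrite addr_ge0.
  pose x' : 'cV[R]_(m+k) := col_mx xE (const_mx M).
  have [b' [hb' hf']] : exists b', nonneg_vec b' /\ is_fixed_point W b' x'.
    apply: fp_build.
      by apply: col_nonneg => // i; rewrite mxE.
    move=> v; rewrite -(splitK v); case: (split v) => a /=.
      rewrite sum_col col_mxEu -/(A a) -/(c a).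
      have [hlt|hge] := ltP (c a) 0.
        apply: bound_neg => //; apply: le_trans (@le_sum_abs _ _ f a) _.
        by rewrite /M lerDl.
      have ceq : c a = 0 by apply: le_anti; rewrite hge csum_le.
      have [_ h'] := rowz a ceq.
      rewrite ceq mul0r addr0.
      have := fp_le hb hf (lshift 1 a); rewrite big_split_ord big_ord1 /=.
      rewrite h' mul0r addr0 mxE /A; congr (_ <= _); apply: eq_bigr => j _.
      by rewrite hEE mxE.
    rewrite sum_col col_mxEd mxE -/(B a).
    have h1 : (\sum_(l < k) W (rshift m a) (rshift m l)) * M <= 0.
      apply: mulr_le0_ge0 => //; apply: sumr_le0 => l _; apply: dWn.
      exact: rsh_notin.
    have h2 : B a <= \sum_l `|B l| by exact: (@le_sum_abs _ _ B a).
    have h3 : \sum_l `|B l| <= M by rewrite /M lerDr.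
    lra.
  exists b', x'; split=> //.
    by apply: col_nonneg => // i; rewrite mxE.
  by apply: supp_col => i; rewrite col_mxEu mxE.
Qed.
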